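(* In the setting described in the context, the following hold. (i) $\mathcal P_{\mathcal C}+\mathcal P_{\mathcal N}=M(M^TM)^{-1}M^T$, the orthogonal projection onto $\mathrm{col}(M)$. (ii) $$\mathcal P_{\mathcal C}=\sum_{i=r+1}^{r+s}\frac{1}{1-\sigma_i^2}\tilde Z_i\tilde Z_i^T-\sum_{i=r+1}^{r+s}\frac{\sigma_i}{1-\sigma_i^2}\tilde Z_i\tilde W_i^T+\sum_{i=r+s+1}^p\tilde Z_i\tilde Z_i^T,$$ $$\mathcal P_{\mathcal N}=\sum_{i=r+1}^{r+s}\frac{1}{1-\sigma_i^2}\tilde W_i\tilde W_i^T-\sum_{i=r+1}^{r+s}\frac{\sigma_i}{1-\sigma_i^2}\tilde W_i\tilde Z_i^T+\sum_{i=r+s+1}^K\tilde W_i\tilde W_i^T.$$ (iii) For any $x\in\mathrm{col}(\tilde Z_{(r+1):p})$ and $y\in\mathrm{col}(\tilde W_{(r+1):K})$: $\mathcal P_{\mathcal C}(x+y)=x$ and $\mathcal P_{\mathcal N}(x+y)=y$. (iv) For any $x\in\mathbb{R}^n$: $\|\mathcal P_{\mathcal C}^Tx\|\ge\|\tilde Z_{(r+1):p}^Tx\|$.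
   Context: Let $Z\in\mathbb{R}^{n\times p}$ and $W\in\mathbb{R}^{n\times K}$ have orthonormal columns (spanning $\mathrm{col}(X)$ and $S_K(P)$ respectively). Let $Z^TW=U\Sigma V^T$ be an SVD with $U\in\mathbb{R}^{p\times p}$, $V\in\mathbb{R}^{K\times K}$ orthogonal and singular values on the diagonal of $\Sigma$: $\sigma_1=\dots=\sigma_r=1>\sigma_{r+1}\ge\dots\ge\sigma_{r+s}>0=\sigma_{r+s+1}=\cdots$. Put $\tilde Z=ZU$, $\tilde W=WV$; $M_i$ denotes column $i$ and $M_{i:j}$ columns $i$ through $j$ of a matrix. Let $M=(\tilde Z_{(r+1):p},\tilde W_{(r+1):K})$ and $\mathcal P_{\mathcal C}=(\tilde Z_{(r+1):p},0_{n\times(K-r)})(M^TM)^{-1}M^T$, $\mathcal P_{\mathcal N}=(0_{n\times(p-r)},\tilde W_{(r+1):K})(M^TM)^{-1}M^T$. $\|\cdot\|$ is the Euclidean norm. *)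

(* Defs.v *)
From HB Require Import structures.
From mathcomp Require Import all_boot all_order all_algebra.
Set Implicit Arguments. Unset Strict Implicit. Unset Printing Implicit Defensive.
Import Order.TTheory GRing.Theory Num.Theory.
Local Open Scope ring_scope.

Lemma shift_ord_proof (r p : nat) (j : 'I_(p - r)) : (r + j < p)%N.
Proof. have := ltn_ord j; rewrite ltn_subRL; by []. Qed.

Definition shift_ord (r p : nat) (j : 'I_(p - r)) : 'I_p := Ordinal (shift_ord_proof j).

(* columns r+1 .. p (1-based) of A, i.e. A_{(r+1):p} *)
Definition tailcols {R : Type} {n p : nat} (r : nat) (A : 'M[R]_(n, p)) : 'M[R]_(n, p - r) :=
  colsub (@shift_ord r p) A.

(* column i (0-based, natural-number index) of A; zero if i is out of range *)
Definition colN {R : pzRingType} {n m : nat} (A : 'M[R]_(n, m)) (i : nat) : 'cV[R]_n :=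
  \col_k (match (insub i : option 'I_m) with Some j => A k j | None => 0 end).

Definition enorm {R : rcfType} {n : nat} (v : 'cV[R]_n) : R :=
  Num.sqrt (\sum_(k < n) v k 0 ^+ 2).

Definition Sigma_mx {R : pzRingType} (p K : nat) (sigma : nat -> R) : 'M[R]_(p, K) :=
  \matrix_(i < p, j < K) (if (i == j :> nat) then sigma i else 0).

Section Proj.
Variables (R : fieldType) (n p K r : nat).
Variables (Zt : 'M[R]_(n, p)) (Wt : 'M[R]_(n, K)).

Definition Mmat : 'M[R]_(n, (p - r) + (K - r)) := row_mx (tailcols r Zt) (tailcols r Wt).

Definition PC : 'M[R]_n :=
  row_mx (tailcols r Zt) (0 : 'M[R]_(n, K - r)) *m invmx (Mmat^T *m Mmat) *m Mmat^T.

Definition PN : 'M[R]_n :=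
  row_mx (0 : 'M[R]_(n, p - r)) (tailcols r Wt) *m invmx (Mmat^T *m Mmat) *m Mmat^T.
End Proj.

(* Main.v *)
Require Import Defs.
From HB Require Import structures.
From mathcomp Require Import all_boot all_order all_algebra.
From mathcomp Require Import zify ring.
Set Implicit Arguments. Unset Strict Implicit. Unset Printing Implicit Defensive.
Import Order.TTheory GRing.Theory Num.Theory.
Local Open Scope ring_scope.

Section Emx.
Variable R : comPzRingType.

Definition Emx (m1 m2 : nat) (f : nat -> R) : 'M[R]_(m1, m2) :=
  \matrix_(i < m1, j < m2) (if (i == j :> nat) then f i else 0).

Lemma Emx_mul m1 m2 m3 f g :
  Emx m1 m2 f *m Emx m2 m3 g = Emx m1 m3 (fun i => if (i < m2)%N then f i * g i else 0).
Proof.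
apply/matrixP => i k; rewrite !mxE.
case: (ltnP i m2) => h.
  rewrite (bigD1 (Ordinal h)) //= !mxE eqxx big1 ?addr0.
    by case: (i == k :> nat); rewrite ?mulr0.
  move=> j /eqP hj; rewrite !mxE; case: eqP; last by rewrite mul0r.
  by move=> e; case: hj; apply: val_inj => /=.
rewrite big1; first by case: (_ == _).
move=> j _; rewrite !mxE; case: eqP; last by rewrite mul0r.
by move=> e; have := ltn_ord j; rewrite -e ltnNge h.
Qed.

Lemma Emx_tr m1 m2 f : (Emx m1 m2 f)^T = Emx m2 m1 f.
Proof.
apply/matrixP => i j; rewrite !mxE eq_sym.
by case: eqP => // ->.
Qed.

Lemma Emx_add m1 m2 f g : Emx m1 m2 f + Emx m1 m2 g = Emx m1 m2 (fun i => f i + g i).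
Proof. by apply/matrixP => i j; rewrite !mxE; case: eqP; rewrite ?addr0. Qed.

Lemma Emx_opp m1 m2 f : - Emx m1 m2 f = Emx m1 m2 (fun i => - f i).
Proof. by apply/matrixP => i j; rewrite !mxE; case: eqP; rewrite ?oppr0. Qed.

Lemma Emx1 m : (1%:M : 'M[R]_m) = Emx m m (fun _ => 1).
Proof. apply/matrixP => i j; rewrite !mxE; have -> : (i == j) = (i == j :> nat) by []. by case: (i == j :> nat). Qed.

Lemma Emx0 m1 m2 : (0 : 'M[R]_(m1, m2)) = Emx m1 m2 (fun _ => 0).
Proof. by apply/matrixP => i j; rewrite !mxE if_same. Qed.

Lemma Emx_eq m1 m2 f g : (forall i, (i < m1)%N -> (i < m2)%N -> f i = g i) ->
  Emx m1 m2 f = Emx m1 m2 g.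
Proof.
move=> h; apply/matrixP => i j; rewrite !mxE; case: eqP => // e.
by rewrite h // e.
Qed.

Lemma colN_E n m (X : 'M[R]_(n, m)) (j : 'I_m) a : colN X j a ord0 = X a j.
Proof.
by rewrite mxE valK.
Qed.
Lemma colN_out n m (X : 'M[R]_(n, m)) i : (m <= i)%N -> colN X i = 0.
Proof.
move=> h; apply/matrixP => a b; rewrite !mxE; case: insubP => [u hu _|//].
by move: hu; rewrite ltnNge h.
Qed.

Lemma mulEmx n m1 m2 (X : 'M[R]_(n, m1)) (Y : 'M[R]_(n, m2)) f :
  X *m Emx m1 m2 f *m Y^T = \sum_(0 <= i < m2) f i *: (colN X i *m (colN Y i)^T).
Proof.
apply/matrixP => a b; rewrite summxE big_mkord mxE; apply: eq_bigr => k _.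
have -> : (X *m Emx m1 m2 f) a k = colN X k a ord0 * f k.
  rewrite mxE; case: (ltnP k m1) => h.
    rewrite (bigD1 (Ordinal h)) //= [Emx _ _ _ _ _]mxE eqxx big1 ?addr0.
      by rewrite -(colN_E X (Ordinal h)).
    move=> j /eqP hj; rewrite mxE; case: eqP; last by rewrite mulr0.
    by move=> e; case: hj; apply: val_inj => /=.
  rewrite colN_out // mxE mul0r big1 // => j _; rewrite mxE; case: eqP; last by rewrite mulr0.
  by move=> e; have := ltn_ord j; rewrite e ltnNge h.
rewrite [Y^T k b]mxE [RHS]mxE [(colN X k *m _) a b]mxE big_ord1 [_^T ord0 b]mxE colN_E.
by rewrite mulrAC mulrC.
Qed.

Lemma colN_tail n p r (X : 'M[R]_(n, p)) j : colN (tailcols r X) j = colN X (r + j)%N.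
Proof.
apply/matrixP => a b; rewrite !mxE.
case: insubP => [u hu eu|hu]; case: insubP => [v hv ev|hv] //.
- rewrite mxE; congr (X a _); apply: val_inj => /=; by rewrite ev eu.
- by move: hv; rewrite -ltn_subRL hu.
- by move: hu; rewrite ltn_subRL hv.
Qed.

Lemma tail_mul n p q r (X : 'M[R]_(n, p)) (Y : 'M[R]_(n, q)) :
  (tailcols r X)^T *m tailcols r Y =
  \matrix_(i, j) (X^T *m Y) (shift_ord i) (shift_ord j).
Proof. by apply/matrixP => i j; rewrite !mxE; apply: eq_bigr => k _; rewrite !mxE. Qed.

End Emx.

Lemma shift_sum (V : nmodType) r a b (F : nat -> V) : (r <= a)%N ->
  \sum_(a <= i < b) F i = \sum_(a - r <= j < b - r) F (r + j)%N.
Proof.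
move=> h; rewrite -{1}(subnK h) big_addn; apply: eq_bigr => i _; by rewrite addnC.
Qed.

Arguments shift_sum {V} r a b F _.

Lemma enormE (R : rcfType) n (v : 'cV[R]_n) : enorm v = Num.sqrt ((v^T *m v) ord0 ord0).
Proof. by rewrite /enorm mxE; congr Num.sqrt; apply: eq_bigr => k _; rewrite mxE expr2. Qed.

Theorem lemma1 (R : rcfType) (n p K r s : nat)
  (Z : 'M[R]_(n, p)) (W : 'M[R]_(n, K)) (U : 'M[R]_p) (V : 'M[R]_K)
  (sigma : nat -> R)
  (hZ : Z^T *m Z = 1%:M) (hW : W^T *m W = 1%:M)
  (hU : U^T *m U = 1%:M) (hV : V^T *m V = 1%:M)
  (hrs : (r + s <= minn p K)%N)
  (hsig1 : forall i : nat, (i < r)%N -> sigma i = 1)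
  (hsigmid : forall i : nat, (r <= i < r + s)%N -> 0 < sigma i < 1)
  (hsigdec : forall i j : nat, (r <= i)%N -> (i <= j)%N -> (j < r + s)%N -> sigma j <= sigma i)
  (hsig0 : forall i : nat, (r + s <= i)%N -> (i < minn p K)%N -> sigma i = 0)
  (hsvd : Z^T *m W = U *m Sigma_mx p K sigma *m V^T) :
  let Zt := Z *m U in
  let Wt := W *m V in
  let M := Mmat r Zt Wt in
  let P_C := PC r Zt Wt in
  let P_N := PN r Zt Wt in
  let Pm := M *m invmx (M^T *m M) *m M^T in
  (* (i) *)
  (P_C + P_N = Pm /\ Pm^T = Pm /\ Pm *m Pm = Pm /\ (Pm == M^T)%MS)
  (* (ii) *)
  /\ P_C = \sum_(r <= i < r + s) (1 - sigma i ^+ 2)^-1 *: (colN Zt i *m (colN Zt i)^T)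
           - \sum_(r <= i < r + s) (sigma i / (1 - sigma i ^+ 2)) *: (colN Zt i *m (colN Wt i)^T)
           + \sum_(r + s <= i < p) colN Zt i *m (colN Zt i)^T
  /\ P_N = \sum_(r <= i < r + s) (1 - sigma i ^+ 2)^-1 *: (colN Wt i *m (colN Wt i)^T)
           - \sum_(r <= i < r + s) (sigma i / (1 - sigma i ^+ 2)) *: (colN Wt i *m (colN Zt i)^T)
           + \sum_(r + s <= i < K) colN Wt i *m (colN Wt i)^T
  (* (iii) *)
  /\ (forall x y : 'cV[R]_n,
        (x^T <= (tailcols r Zt)^T)%MS -> (y^T <= (tailcols r Wt)^T)%MS ->
        P_C *m (x + y) = x /\ P_N *m (x + y) = y)
  (* (iv) *)
  /\ (forall x : 'cV[R]_n, enorm ((tailcols r Zt)^T *m x) <= enorm (P_C^T *m x)).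
Proof.
move=> Zt Wt M P_C P_N Pm.
have hsp : (s <= p - r)%N by lia.
have hsK : (s <= K - r)%N by lia.
have hZt : Zt^T *m Zt = 1%:M.
  by rewrite /Zt trmx_mul -mulmxA (mulmxA Z^T) hZ mul1mx hU.
have hWt : Wt^T *m Wt = 1%:M.
  by rewrite /Wt trmx_mul -mulmxA (mulmxA W^T) hW mul1mx hV.
have hZW : Zt^T *m Wt = Sigma_mx p K sigma.
  rewrite /Zt /Wt trmx_mul -mulmxA (mulmxA Z^T) hsvd !mulmxA hU mul1mx.
  by rewrite -mulmxA hV mulmx1.
pose dd (j : nat) := if (j < s)%N then sigma (r + j)%N else 0.
pose c (j : nat) := (1 - dd j ^+ 2)^-1.
have hdd0 : forall j, (s <= j)%N -> dd j = 0.
  by move=> j hj; rewrite /dd ltnNge hj.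
have hc0 : forall j, (s <= j)%N -> c j = 1.
  by move=> j hj; rewrite /c hdd0 // expr0n /= subr0 invr1.
have hddr : forall j, 0 <= dd j < 1.
  move=> j; rewrite /dd; case: ifP => hj; last by rewrite lexx ltr01.
  have /andP [h1 h2] := hsigmid (r + j) (ltac:(apply/andP; split; lia)).
  by rewrite (ltW h1) h2.
have hpos : forall j, 0 < 1 - dd j ^+ 2.
  move=> j; have /andP [h1 h2] := hddr j; rewrite subr_gt0 expr2.
  case: (ltrP 0 (dd j)) => h3.
    by apply: (@lt_trans _ _ (dd j)); [rewrite gtr_pMr | ].
  have -> : dd j = 0 by apply/eqP; rewrite eq_le h3 h1.
  by rewrite mul0r ltr01.
have hcd : forall j, c j * (1 - dd j ^+ 2) = 1.
  by move=> j; rewrite /c mulVf // gt_eqF.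
have hc1 : forall j, 1 <= c j.
  move=> j; rewrite /c invf_ge1 // lerBlDr lerDl; exact: sqr_ge0.
set A := tailcols r Zt.
set B := tailcols r Wt.
have hAA : A^T *m A = 1%:M.
  rewrite tail_mul hZt; apply/matrixP => i j; rewrite !mxE.
  by rewrite -[_ == _]/((r + i)%N == (r + j)%N) eqn_add2l.
have hBB : B^T *m B = 1%:M.
  rewrite tail_mul hWt; apply/matrixP => i j; rewrite !mxE.
  by rewrite -[_ == _]/((r + i)%N == (r + j)%N) eqn_add2l.
have hAB : A^T *m B = Emx (p - r) (K - r) dd.
  rewrite tail_mul hZW; apply/matrixP => i j; rewrite !mxE /= eqn_add2l.
  case: eqP => // e; rewrite /dd e; case: ltnP => // h.
  apply: hsig0; first lia.
  have := ltn_ord i; have := ltn_ord j; rewrite -e; lia.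
set D := Emx (p - r) (K - r) dd.
set C1 := Emx (p - r) (p - r) c.
set C2 := Emx (K - r) (K - r) c.
have hM : M = row_mx A B by [].
have hG : M^T *m M = block_mx 1%:M D D^T 1%:M.
  have hBA : B^T *m A = D^T by rewrite /D -hAB trmx_mul trmxK.
  by rewrite hM tr_row_mx mul_col_row hAA hBB hAB hBA.
set Ginv := block_mx C1 (- (C1 *m D)) (- (D^T *m C1)) C2.
have hGG : M^T *m M *m Ginv = 1%:M.
  rewrite hG mulmx_block [RHS]scalar_mx_block /Ginv /C1 /C2 /D Emx_tr !Emx1.
  rewrite !mulmxN !Emx_mul !Emx_opp !Emx_add.
  congr block_mx; (try rewrite [RHS]Emx0); apply: Emx_eq => i h1 h2 /=; rewrite ?h1 ?h2;
    (case: (ltnP i s) => hs;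
    [ have hp : (i < p - r)%N := ltac:(lia); have hk : (i < K - r)%N := ltac:(lia); rewrite ?hp ?hk;
      first [ring | (transitivity (c i * (1 - dd i ^+ 2)); [ring | exact: hcd i])]
    | rewrite ?hdd0 ?hc0 //; rewrite ?(mul0r, mulr0, oppr0, if_same, addr0, add0r, mul1r, mulr1) // ]).
have [hGu _] := mulmx1_unit hGG.
have invG : invmx (M^T *m M) = Ginv.
  by rewrite -[invmx _]mulmx1 -hGG mulmxA mulVmx ?mul1mx.
have hVG : invmx (M^T *m M) *m (M^T *m M) = 1%:M by rewrite mulVmx.
have hPC : P_C = A *m C1 *m A^T - A *m (C1 *m D) *m B^T.
  rewrite /P_C /PC -/M invG /Ginv mul_row_block hM tr_row_mx mul_row_col.
  by rewrite !mul0mx !addr0 mulmxN mulNmx.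
have hPN : P_N = - (B *m (D^T *m C1) *m A^T) + B *m C2 *m B^T.
  rewrite /P_N /PN -/M invG /Ginv mul_row_block hM tr_row_mx mul_row_col.
  by rewrite !mul0mx !add0r mulmxN mulNmx.
split.
  split.
    rewrite /P_C /P_N /PC /PN -/M -mulmxDl -mulmxDl add_row_mx addr0 add0r.
    by [].
  split.
    by rewrite /Pm !trmx_mul trmxK trmx_inv trmx_mul trmxK mulmxA.
  split.
    rewrite /Pm !mulmxA -(mulmxA (M *m invmx (M^T *m M))) -(mulmxA M) hVG mulmx1.
    by [].
  apply/andP; split; first exact: submxMl.
  have e : M^T *m Pm = M^T by rewrite /Pm !mulmxA mulmxV // mul1mx.
  rewrite -{1}e; exact: submxMl.
split.
  rewrite hPC /C1 /D Emx_mul !mulEmx.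
  rewrite !(shift_sum r r (r+s)) // !subnn !addKn.
  rewrite (shift_sum r (r+s) p) ?leq_addr // addKn.
  rewrite (@big_cat_nat _ _ _ s 0 (p - r)) //= (@big_cat_nat _ _ _ s 0 (K - r)) //=.
  have hsr : forall i, (0 <= i < s)%N -> (i < p - r)%N /\ (i < K - r)%N.
    move=> i /andP [_ hi]; split; lia.
  rewrite [X in _ - (_ + X)]big_nat_cond [X in _ - (_ + X)]big1 ?addr0; last first.
    by move=> i /andP [/andP [hi _] _]; rewrite hdd0 // mulr0 if_same scale0r.
  rewrite addrAC; congr (_ + _ + _).
  - apply: eq_big_nat => i /andP [_ hi]; by rewrite !colN_tail /c /dd hi.
  - congr (- _); apply: eq_big_nat => i hi; have [h1 _] := hsr i hi.
    move: hi => /andP [_ hi]; by rewrite !colN_tail h1 /c /dd hi mulrC.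
  - apply: eq_big_nat => i /andP [hi _]; by rewrite !colN_tail hc0 // scale1r.
split.
  rewrite hPN /C1 /D Emx_tr Emx_mul /C2 !mulEmx.
  rewrite !(shift_sum r r (r+s)) // !subnn !addKn.
  rewrite (shift_sum r (r+s) K) ?leq_addr // addKn.
  rewrite (@big_cat_nat _ _ _ s 0 (p - r)) //= (@big_cat_nat _ _ _ s 0 (K - r)) //=.
  have hsr : forall i, (0 <= i < s)%N -> (i < p - r)%N /\ (i < K - r)%N.
    move=> i /andP [_ hi]; split; lia.
  rewrite [X in - (_ + X)]big_nat_cond [X in - (_ + X)]big1 ?addr0; last first.
    by move=> i /andP [/andP [hi _] _]; rewrite hdd0 // mul0r if_same scale0r.
  rewrite [LHS]addrC [LHS]addrAC; congr (_ + _ + _).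
  - apply: eq_big_nat => i /andP [_ hi]; by rewrite !colN_tail /c /dd hi.
  - congr (- _); apply: eq_big_nat => i hi; have [h1 _] := hsr i hi.
    move: hi => /andP [_ hi]; by rewrite !colN_tail h1 /c /dd hi.
  - apply: eq_big_nat => i /andP [hi _]; by rewrite !colN_tail hc0 // scale1r.
split.
  move=> x y /submxP [w hx] /submxP [v hy].
  have ex : x = A *m w^T by rewrite -[x]trmxK hx trmx_mul trmxK.
  have ey : y = B *m v^T by rewrite -[y]trmxK hy trmx_mul trmxK.
  have exy : x + y = M *m col_mx w^T v^T by rewrite hM mul_row_col -ex -ey.
  have hPCM : P_C *m M = row_mx A 0.
    by rewrite /P_C /PC -/M -!mulmxA hVG mulmx1.
  have hPNM : P_N *m M = row_mx 0 B.
    by rewrite /P_N /PN -/M -!mulmxA hVG mulmx1.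
  split; rewrite exy mulmxA ?hPCM ?hPNM mul_row_col mul0mx ?addr0 ?add0r.
    by rewrite -ex.
  by rewrite -ey.
move=> x; rewrite !enormE; apply: ler_wsqrtr.
set u := A^T *m x.
have hPP : P_C *m P_C^T = A *m C1 *m A^T.
  have hGinv : Ginv *m (M^T *m M) = 1%:M by rewrite -invG.
  rewrite /P_C /PC -/M invG !trmx_mul trmxK !mulmxA.
  rewrite -(mulmxA _ M^T M) -(mulmxA _ Ginv) hGinv mulmx1.
  rewrite /Ginv tr_block_mx mul_row_block tr_row_mx mul_row_col !mul0mx !addr0.
  rewrite trmx0 mulmx0 addr0 /C1 Emx_tr.
  by [].
have e1 : (P_C^T *m x)^T *m (P_C^T *m x) = u^T *m C1 *m u.
  rewrite trmx_mul trmxK -(mulmxA x^T P_C (P_C^T *m x)) (mulmxA P_C P_C^T x) hPP.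
  by rewrite /u trmx_mul trmxK !mulmxA.
have e2 : u^T *m u = u^T *m 1%:M *m (u^T)^T by rewrite mulmx1 trmxK.
have e3 : u^T *m C1 *m u = u^T *m C1 *m (u^T)^T by rewrite trmxK.
rewrite e1 e3 e2 Emx1 /C1 !mulEmx !summxE.
apply: ler_sum => i _.
set q := (colN u^T i *m (colN u^T i)^T) ord0 ord0.
have hq : 0 <= q.
  by rewrite /q mxE big_ord1 [(colN _ _)^T _ _]mxE -expr2 sqr_ge0.
have hsc : forall (a : R) (Q : 'M[R]_1), (a *: Q) ord0 ord0 = a * Q ord0 ord0 by move=> a Q; rewrite mxE.
rewrite !hsc -/q mul1r -{1}(mul1r q).
exact: (ler_wpM2r hq (hc1 i)).
Qed.
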